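(* Let $K$ be an infinite field and let $\mathcal{A} \subseteq (\mathbb{Z}_{\ge 0})^n$ be a support set all of whose elements are monomials of the same type. Let $G \subseteq S_n$ be a subgroup acting transitively on the set of all monomials of this type. Then for general coefficients of $f \in K^{\mathcal{A}}$ with respect to $\mathcal{A}$, the ideal $(G.f) \subseteq K[x_1,\dots,x_n]$ is a monomial ideal, and it is generated by the orbit $G.m$ of any monomial $m$ occurring in $f$ (equivalently, it is generated by all monomials of this type).
   Context: A support set is a non-empty finite subset $\mathcal{A}\subseteq(\mathbb{Z}_{\ge0})^n$; monomials are identified with exponent vectors. The type of a monomial is the partition of its degree obtained by listing its exponents in decreasing order; two monomials have the same type iff they are permutations of each other. $K^{\mathcal{A}}$ is identified with the polynomials whose support is contained in $\mathcal{A}$. $S_n$ acts by $\sigma.x_i = x_{\sigma(i)}$; $G.f$ is the orbit of $f$ and $(G.f)$ the ideal generated by it. ''For general coefficients of $f$ with respect to $\mathcal{A}$'' means: the set of $f\in K^{\mathcal{A}}$ for which the assertion holds contains a non-empty Zariski-open subset of $K^{\mathcal{A}}$. *)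

(* Defs.v *)
From HB Require Import structures.
From mathcomp Require Import all_boot all_order all_algebra all_fingroup.
From mathcomp Require Import mpoly.
Set Implicit Arguments. Unset Strict Implicit. Unset Printing Implicit Defensive.
Import GRing.Theory.
Local Open Scope ring_scope.

(* The type of a monomial (exponent vector): the partition of its degree
   obtained by listing its (nonzero) exponents in decreasing order. *)
Definition mtype (n : nat) (a : 'X_{1..n}) : seq nat :=
  sort (fun x y => (y <= x)%N) [seq e <- (a : seq nat) | e != 0%N].

Definition in_ideal (n : nat) (K : fieldType) (S : {mpoly K[n]} -> Prop)
  (p : {mpoly K[n]}) : Prop :=
  exists gs : seq ({mpoly K[n]} * {mpoly K[n]}),
    (forall q, q \in gs -> S q.2) /\ p = \sum_(q <- gs) q.1 * q.2.

Definition same_ideal (n : nat) (K : fieldType) (S T : {mpoly K[n]} -> Prop) : Prop :=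
  forall p, in_ideal S p <-> in_ideal T p.

(* the orbit G.f of f, for the action sigma.x_i = x_(sigma i) (msym) *)
Definition orbit_poly (n : nat) (K : fieldType) (G : {group 'S_n})
  (f : {mpoly K[n]}) : {mpoly K[n]} -> Prop :=
  fun g => exists2 s, s \in G & g = msym s f.

Definition monomials_of_type (n : nat) (K : fieldType) (t : seq nat)
  : {mpoly K[n]} -> Prop :=
  fun g => exists2 b : 'X_{1..n}, mtype b = t & g = 'X_[b].

(* K^A, A = [:: a_0; ...; a_(k-1)] a duplicate-free list, is identified with
   K^k via the coordinates f |-> (f@_(a_i))_i of a polynomial with support in A. *)
Definition coords (n : nat) (K : fieldType) (A : seq 'X_{1..n}) (f : {mpoly K[n]})
  : 'I_(size A) -> K := fun i => f@_(nth 0%MM A i).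

Definition zariski_open (k : nat) (K : fieldType) (U : ('I_k -> K) -> Prop) : Prop :=
  exists S : {mpoly K[k]} -> Prop,
    forall v, U v <-> exists h, S h /\ h.@[v] != 0.

Definition infinite_field (K : fieldType) : Prop :=
  forall s : seq K, exists x : K, x \notin s.

Arguments coords {n K} A f _.
Arguments orbit_poly {n K} G f _.
Arguments in_ideal {n K} S p.
Arguments same_ideal {n K} S T.
Arguments monomials_of_type {n} K t _.
Arguments zariski_open {k K} U.

(* Main.v *)
Require Import Defs.
From HB Require Import structures.
From mathcomp Require Import all_boot all_order all_algebra all_fingroup.
From mathcomp Require Import mpoly.
Set Implicit Arguments. Unset Strict Implicit. Unset Printing Implicit Defensive.
Import GRing.Theory.
Local Open Scope ring_scope.

Section Ideal.
Variables (n : nat) (K : fieldType).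
Implicit Types (S T : {mpoly K[n]} -> Prop) (p q : {mpoly K[n]}).

Lemma in_ideal0 T : in_ideal T 0.
Proof. by exists [::]; split => //; rewrite big_nil. Qed.

Lemma in_idealD T p q : in_ideal T p -> in_ideal T q -> in_ideal T (p + q).
Proof.
move=> [g1 [h1 ->]] [g2 [h2 ->]]; exists (g1 ++ g2); split; last by rewrite big_cat.
by move=> r; rewrite mem_cat => /orP[/h1|/h2].
Qed.

Lemma in_idealM T c p : in_ideal T p -> in_ideal T (c * p).
Proof.
move=> [g [h ->]]; exists [seq (c * r.1, r.2) | r <- g]; split.
  by move=> r /mapP[r' /h H ->].
rewrite big_map mulr_sumr; apply: eq_bigr => r _ /=; by rewrite mulrA.
Qed.

Lemma in_ideal_gen T p : T p -> in_ideal T p.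
Proof.
move=> Tp; exists [:: (1, p)]; split; first by move=> r; rewrite inE => /eqP ->.
by rewrite big_seq1 mul1r.
Qed.

Lemma in_ideal_trans S T : (forall g, S g -> in_ideal T g) ->
  forall p, in_ideal S p -> in_ideal T p.
Proof.
move=> hST p [g [h ->]]; elim: g h => [|r g IH] h; first by rewrite big_nil; exact: in_ideal0.
rewrite big_cons; apply: in_idealD; last by apply: IH => q hq; apply: h; rewrite inE hq orbT.
by apply: in_idealM; apply: hST; apply: h; rewrite inE eqxx.
Qed.

Lemma same_idealP S T : (forall g, S g -> in_ideal T g) ->
  (forall g, T g -> in_ideal S g) -> same_ideal S T.
Proof. by move=> h1 h2 p; split; apply: in_ideal_trans. Qed.

Lemma same_ideal_trans S T U : same_ideal S T -> same_ideal T U -> same_ideal S U.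
Proof. by move=> h1 h2 p; rewrite h1 h2. Qed.
End Ideal.

Definition mp n (s : 'S_n) (m : 'X_{1..n}) : 'X_{1..n} := [multinom m ((s^-1)%g i) | i < n].

Lemma msymXp n (K : fieldType) (s : 'S_n) m : msym s ('X_[m] : {mpoly K[n]}) = 'X_[mp s m].
Proof. exact: msymX. Qed.

Lemma mtype_mp n (s : 'S_n) m : mtype (mp s m) = mtype m.
Proof.
rewrite /mtype; apply/perm_sortP.
- by move=> x y; apply: leq_total.
- by move=> x y z h1 h2; apply: leq_trans h2 h1.
- by move=> x y /andP[h1 h2]; apply/eqP; rewrite eqn_leq h1 h2.
apply: perm_filter.
have E : forall m' : 'X_{1..n}, (m' : seq nat) = [seq m' i | i <- enum 'I_n].
  by move=> m'; rewrite -[LHS](map_tnth_enum (multinom_val m')).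
rewrite (E (mp s m)) (E m).
have -> : [seq mp s m i | i <- enum 'I_n] = map m (map (s^-1)%g (enum 'I_n)).
  by elim: (enum _) => //= i l ->; rewrite /mp mnmE.
apply: perm_map; apply: uniq_perm.
- by rewrite map_inj_uniq ?enum_uniq //; apply: perm_inj.
- exact: enum_uniq.
move=> i; rewrite mem_enum inE; apply/mapP; exists (s i); first by rewrite mem_enum.
by rewrite permK.
Qed.

Lemma sum_pick (T : eqType) (V : zmodType) (r : seq T) (x : T) (F : T -> V) :
  uniq r -> \sum_(b <- r) (if b == x then F b else 0) = if x \in r then F x else 0.
Proof.
elim: r => [|y r IH] /=; first by rewrite big_nil.
move=> /andP[yr ur]; rewrite big_cons IH // inE.
case: (y =P x) => [<-|ne] /=; first by rewrite eqxx (negbTE yr) addr0.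
by rewrite add0r; case: (x =P y) => // E; case: ne.
Qed.

Section Main.
Variables (K : fieldType) (n : nat) (A : seq 'X_{1..n}) (G : {group 'S_n}).
Hypothesis A0 : A != [::].
Hypothesis uA : uniq A.
Hypothesis hA : forall a b, a \in A -> b \in A -> mtype a = mtype b.
Hypothesis htr : forall a b : 'X_{1..n}, mtype a = mtype (head 0%MM A) ->
     mtype b = mtype (head 0%MM A) ->
     exists2 s, s \in G & msym s ('X_[a] : {mpoly K[n]}) = 'X_[b].

Local Notation m0 := (head 0%MM A).

Lemma X_inj (a b : 'X_{1..n}) : ('X_[a] : {mpoly K[n]}) = 'X_[b] -> a = b.
Proof.
move/(congr1 (mcoeff a)); rewrite !mcoeffX eqxx.
by case: (b =P a) => // _ /eqP; rewrite oner_eq0.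
Qed.

Lemma typeA a : a \in A -> mtype a = mtype m0.
Proof. by move=> aA; apply: hA => //; case: A A0 => // c s _; rewrite mem_head. Qed.

Definition L := [seq mp s m0 | s <- enum G].
Definition B := undup L.
Definition N := size B.
Definition bk (k : 'I_N) := nth 0%MM B k.
Definition sig (k : 'I_N) : 'S_n := nth 1%g (enum G) (index (bk k) L).

Lemma bkL k : bk k \in L.
Proof. by rewrite -mem_undup /bk mem_nth. Qed.

Lemma sigG k : sig k \in G.
Proof.
have : (index (bk k) L < size (enum G))%N by rewrite -(size_map (fun s => mp s m0)) index_mem bkL.
by move=> H; rewrite -mem_enum /sig mem_nth.
Qed.

Lemma sig_m0 k : mp (sig k) m0 = bk k.
Proof.
have H : (index (bk k) L < size (enum G))%N by rewrite -(size_map (fun s => mp s m0)) index_mem bkL.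
by rewrite /sig -(nth_map 1%g 0%MM (fun s => mp s m0)) // nth_index // bkL.
Qed.

Lemma inB x : mtype x = mtype m0 -> x \in B.
Proof.
move=> tx; have [s sG] := htr (erefl _) tx.
rewrite msymXp => /X_inj <-.
by rewrite mem_undup; apply: map_f; rewrite mem_enum.
Qed.

Lemma bk_inj j k : (bk j == bk k) = (j == k).
Proof. by rewrite /bk nth_uniq ?undup_uniq. Qed.

Lemma exists_bk x : x \in B -> exists k, bk k = x.
Proof.
move=> xB; have H : (index x B < N)%N by rewrite index_mem.
by exists (Ordinal H); rewrite /bk /= nth_index.
Qed.


Definition coef (j k : 'I_N) (i : 'I_(size A)) : bool := bk k == mp (sig j) (nth 0%MM A i).
Definition Mv (v : 'I_(size A) -> K) : 'M[K]_N :=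
  \matrix_(j, k) \sum_(i < size A) v i * (coef j k i)%:R.
Definition Mp : 'M[{mpoly K[size A]}]_N :=
  \matrix_(j, k) \sum_(i < size A) 'X_i * (coef j k i)%:R.
Definition hdet := \det Mp.

Lemma hdet_eval v : hdet.@[v] = \det (Mv v).
Proof.
rewrite /hdet -det_map_mx; congr (\det _); apply/matrixP => j k.
rewrite !mxE rmorph_sum; apply: eq_bigr => i _.
by rewrite rmorphM /= mevalXU rmorph_nat.
Qed.

Definition e0 : 'I_(size A) -> K := fun i => (nat_of_ord i == 0%N)%:R.

Lemma Mv_e0 : Mv e0 = 1%:M.
Proof.
have sA : (0 < size A)%N by case: A A0.
apply/matrixP => j k; rewrite !mxE (bigD1 (Ordinal sA)) //= big1; last first.
  by move=> i /negbTE ne; rewrite /e0 -(inj_eq val_inj) /= in ne; rewrite /e0 ne mul0r.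
rewrite addr0 /e0 eqxx mul1r /coef.
have -> : nth 0%MM A 0 = m0 by case: A A0.
by rewrite sig_m0 bk_inj eq_sym.
Qed.

Lemma f_exp (f : {mpoly K[n]}) : (forall m, m \in msupp f -> m \in A) ->
  f = \sum_(i < size A) (coords A f i) *: 'X_[nth 0%MM A i].
Proof.
move=> hf; have -> : \sum_(i < size A) (coords A f i) *: 'X_[nth 0%MM A i]
   = \sum_(a <- A) f@_a *: 'X_[a] by rewrite (big_nth 0%MM) big_mkord.
apply/mpolyP => m; rewrite raddf_sum /=.
rewrite (eq_bigr (fun a => if a == m then f@_a else 0)); last first.
  by move=> a _; rewrite mcoeffZ mcoeffX; case: (a == m); rewrite ?mulr1 ?mulr0.
rewrite sum_pick //; case: ifP => // mA; apply/eqP; rewrite mcoeff_eq0.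
by apply/negP => /hf; rewrite mA.
Qed.

Lemma msym_exp (f : {mpoly K[n]}) s : (forall m, m \in msupp f -> m \in A) ->
  msym s f = \sum_(i < size A) (coords A f i) *: 'X_[mp s (nth 0%MM A i)].
Proof.
move=> hf; rewrite {1}(f_exp hf) linear_sum /=; apply: eq_bigr => i _.
by rewrite msymZ msymXp.
Qed.

Lemma pick_B x : x \in B ->
  \sum_(k < N) (bk k == x)%:R *: ('X_[bk k] : {mpoly K[n]}) = 'X_[x].
Proof.
move=> xB.
have -> : \sum_(k < N) (bk k == x)%:R *: ('X_[bk k] : {mpoly K[n]})
   = \sum_(b <- B) (if b == x then 'X_[b] else 0).
  rewrite (big_nth 0%MM) big_mkord; apply: eq_bigr => k _.
  by rewrite /bk; case: (_ == x); rewrite ?scale1r ?scale0r.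
by rewrite sum_pick ?undup_uniq // xB.
Qed.

Lemma inB_A s a : a \in A -> mp s a \in B.
Proof. by move=> aA; apply: inB; rewrite mtype_mp typeA. Qed.

Lemma msym_sig_exp (f : {mpoly K[n]}) j : (forall m, m \in msupp f -> m \in A) ->
  msym (sig j) f = \sum_(k < N) (Mv (coords A f) j k)%:MP * 'X_[bk k].
Proof.
move=> hf; rewrite (msym_exp _ hf).
rewrite (eq_bigr (fun k => \sum_(i < size A) (coords A f i * (coef j k i)%:R) *: 'X_[bk k])); last first.
  by move=> k _; rewrite mxE mul_mpolyC scaler_suml.
rewrite exchange_big /=; apply: eq_bigr => i _.
rewrite (eq_bigr (fun k => coords A f i *: ((bk k == mp (sig j) (nth 0%MM A i))%:R *: 'X_[bk k]))); last first.
  by move=> k _; rewrite scalerA.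
by rewrite -scaler_sumr pick_B // inB_A // mem_nth.
Qed.


Lemma in_ideal_sum (T : {mpoly K[n]} -> Prop) m (F : 'I_m -> {mpoly K[n]}) :
  (forall j, in_ideal T (F j)) -> in_ideal T (\sum_(j < m) F j).
Proof.
move=> hF; apply: (big_ind (in_ideal T)) => //; first exact: in_ideal0.
exact: in_idealD.
Qed.

Lemma X_in (f : {mpoly K[n]}) k : (forall m, m \in msupp f -> m \in A) ->
  \det (Mv (coords A f)) != 0 -> in_ideal (orbit_poly G f) 'X_[bk k].
Proof.
move=> hf hd; set M := Mv (coords A f).
have uM : M \in unitmx by rewrite unitmxE unitfE.
have -> : ('X_[bk k] : {mpoly K[n]}) = \sum_(j < N) (invmx M k j)%:MP * msym (sig j) f.
  rewrite (eq_bigr (fun j => \sum_(l < N) (invmx M k j * M j l)%:MP * 'X_[bk l])); last first.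
    move=> j _; rewrite (msym_sig_exp _ hf) mulr_sumr; apply: eq_bigr => l _.
    by rewrite mulrA -rmorphM.
  rewrite exchange_big /=.
  rewrite (eq_bigr (fun l => ((invmx M *m M) k l)%:MP * 'X_[bk l])); last first.
    by move=> l _; rewrite mxE rmorph_sum mulr_suml.
  rewrite mulVmx // (bigD1 k) //= big1; last first.
    by move=> l /negbTE ne; rewrite mxE eq_sym ne mpolyC0 mul0r.
  by rewrite mxE eqxx mpolyC1 mul1r addr0.
apply: in_ideal_sum => j; apply: in_idealM; apply: in_ideal_gen.
by exists (sig j); rewrite ?sigG.
Qed.

Lemma part1 (f : {mpoly K[n]}) : (forall m, m \in msupp f -> m \in A) ->
  \det (Mv (coords A f)) != 0 ->
  same_ideal (orbit_poly G f) (monomials_of_type K (mtype m0)).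
Proof.
move=> hf hd; apply: same_idealP => g.
  case=> s sG ->; rewrite (msym_exp _ hf); apply: in_ideal_sum => i.
  rewrite -mul_mpolyC; apply: in_idealM; apply: in_ideal_gen.
  by exists (mp s (nth 0%MM A i)) => //; rewrite mtype_mp typeA // mem_nth.
case=> b tb ->; have [k <-] := exists_bk (inB tb); exact: X_in.
Qed.

Lemma part2 (m : 'X_{1..n}) : m \in A ->
  same_ideal (monomials_of_type K (mtype m0)) (orbit_poly G ('X_[m] : {mpoly K[n]})).
Proof.
move=> mA; apply: same_idealP => g.
  case=> b tb ->; apply: in_ideal_gen.
  have [s sG E] := htr (typeA mA) tb; by exists s.
case=> s sG ->; apply: in_ideal_gen; rewrite msymXp.
by exists (mp s m); rewrite // mtype_mp typeA.
Qed.

End Main.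

Theorem theorem1p1 (K : fieldType) (n : nat) (A : seq 'X_{1..n})
  (G : {group 'S_n}) :
  infinite_field K ->
  A != [::] -> uniq A ->
  (forall a b, a \in A -> b \in A -> mtype a = mtype b) ->
  (forall a b : 'X_{1..n}, mtype a = mtype (head 0%MM A) ->
     mtype b = mtype (head 0%MM A) ->
     exists2 s, s \in G & msym s ('X_[a] : {mpoly K[n]}) = 'X_[b]) ->
  exists U : ('I_(size A) -> K) -> Prop,
    [/\ zariski_open U, (exists v, U v) &
      forall f : {mpoly K[n]},
        (forall m, m \in msupp f -> m \in A) ->
        U (coords A f) ->
        same_ideal (orbit_poly G f) (monomials_of_type K (mtype (head 0%MM A)))
        /\ (forall m, m \in msupp f ->
              same_ideal (orbit_poly G f) (orbit_poly G 'X_[m]))].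
Proof.
move=> _ A0 uA hA htr.
exists (fun v => \det (Mv G v) != 0); split.
- exists (fun p => p = hdet K A G) => v; split.
    by move=> H; exists (hdet K A G); rewrite hdet_eval.
  by case=> h' [-> H]; rewrite -hdet_eval.
- by exists (e0 K (A:=A)); rewrite (Mv_e0 K G A0) det1 oner_neq0.
move=> f hf hU; have P1 := part1 A0 uA hA htr hf hU; split => // m mf.
apply: same_ideal_trans P1 _; exact: (part2 A0 hA htr (hf _ mf)).
Qed.
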